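(* For each prime power $q$ there exists a $q^2$-divisible set $\mathcal{C}$ of points in a projective space over $\mathbb{F}_q$ with $|\mathcal{C}|=3q^3-q^2-q-1$ whose span has dimension $k$ satisfying $\max\{8,q+5\}\le k\le\max\{8,2q+3\}$.
   Context: Points are $1$-dimensional subspaces of $\mathbb{F}_q^v$. A set $\mathcal{C}$ of points is $\Delta$-divisible if there is an integer $u$ with $|\mathcal{C}\cap H|\equiv u\pmod{\Delta}$ for every hyperplane $H$ of $\mathbb{F}_q^v$, where $\mathcal{C}\cap H$ is the set of points of $\mathcal{C}$ contained in $H$. *)

(* Defs.v *)
From mathcomp Require Import all_boot all_order all_algebra all_field.
Set Implicit Arguments. Unset Strict Implicit. Unset Printing Implicit Defensive.
Import GRing.Theory.
Local Open Scope ring_scope.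

Definition is_point (F : fieldType) (v : nat) (P : {vspace 'rV[F]_v}) : bool :=
  (\dim P == 1)%N.

Definition is_hyperplane (F : fieldType) (v : nat) (H : {vspace 'rV[F]_v}) : bool :=
  (0 < v)%N && (\dim H == v.-1)%N.

Definition point_set (F : fieldType) (v : nat) (C : seq {vspace 'rV[F]_v}) : Prop :=
  uniq C /\ all (@is_point F v) C.

Definition count_in (F : fieldType) (v : nat) (C : seq {vspace 'rV[F]_v})
    (H : {vspace 'rV[F]_v}) : nat :=
  count (fun P => (P <= H)%VS) C.

Definition divisible (F : fieldType) (v : nat) (Delta : nat)
    (C : seq {vspace 'rV[F]_v}) : Prop :=
  exists u : nat, forall H : {vspace 'rV[F]_v},
    is_hyperplane H -> count_in C H = u %[mod Delta].

Definition span_dim (F : fieldType) (v : nat) (C : seq {vspace 'rV[F]_v}) : nat :=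
  \dim (\sum_(P <- C) P)%VS.

(* Main.v *)
Require Import Defs.
From mathcomp Require Import all_boot all_order all_algebra all_field.
From mathcomp Require Import ring lra zify.
Set Implicit Arguments. Unset Strict Implicit. Unset Printing Implicit Defensive.

Module P1.
Import GRing.Theory.
Local Open Scope ring_scope.

Section Gen.
Variable (F : finFieldType) (v : nat).
Local Notation q := #|F|.
Local Notation vT := 'rV[F]_v.

Definition inS (s : seq 'I_v) (x : vT) := [forall j, (x 0 j != 0) ==> (j \in s)].

Definition Sp (s : seq 'I_v) : {vspace vT} := <<[seq 'e_j | j <- s]>>%VS.

Lemma inS_Sp s x : (x \in Sp s) = inS s x.
Proof.
apply/idP/forallP => [xS j | H].
  apply/implyP => nz; apply: contraR nz => js.
  have := @coord_span _ _ _ (in_tuple [seq (delta_mx 0 j0 : vT) | j0 <- s]) x xS.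
  set X := in_tuple _ => ->.
  rewrite summxE big1 // => i _; rewrite mxE.
  have: X`_i \in [seq 'e_j0 | j0 <- s] by apply: mem_nth; apply: ltn_ord.
  case/mapP => k ks ->; rewrite mxE /=.
  by case: eqP => [kj|]; [rewrite kj ks in js | rewrite mulr0].
rewrite [x]row_sum_delta; apply: memv_suml => j _.
have := H j; case: (x 0 j =P 0) => [-> _|_ /= js]; first by rewrite scale0r mem0v.
by apply: memvZ; apply: memv_span; apply: map_f.
Qed.

Lemma nz_e (a j : 'I_v) : ((('e_a : vT) 0 j) != 0) = (j == a).
Proof. by rewrite mxE eqxx /=; case: (j == a); rewrite ?oner_eq0 ?eqxx. Qed.

Lemma nz_e2 (a b j : 'I_v) : a != b ->
  ((('e_a + 'e_b : vT) 0 j) != 0) = (j == a) || (j == b).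
Proof.
move=> ab; rewrite mxE !mxE eqxx /=.
case: (j =P a) => [ja|_]; case: (j =P b) => [jb|_] //=.
- by rewrite -ja jb eqxx in ab.
- by rewrite addr0 oner_eq0.
- by rewrite add0r oner_eq0.
- by rewrite addr0 eqxx.
Qed.

Lemma inS_e s a : inS s 'e_a = (a \in s).
Proof.
apply/forallP/idP => [/(_ a)|aS j]; first by rewrite nz_e eqxx.
by rewrite nz_e; apply/implyP => /eqP ->.
Qed.

Lemma inS_e2 s a b : a != b -> inS s ('e_a + 'e_b) = (a \in s) && (b \in s).
Proof.
move=> ab; apply/forallP/andP => [H|[aS bS] j].
  by split; [have := H a | have := H b]; rewrite nz_e2 // eqxx ?orbT.
by rewrite nz_e2 //; apply/implyP => /orP[] /eqP ->.
Qed.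

Lemma free_Sp s : uniq s -> free [seq ('e_j : vT) | j <- s].
Proof.
elim: s => [|a s IH] /=; first by rewrite /free span_nil dimv0.
case/andP => aS us; rewrite free_cons IH // andbT.
by rewrite -/(Sp s) inS_Sp inS_e.
Qed.

Lemma dim_Sp s : uniq s -> \dim (Sp s) = size s.
Proof. by move=> us; rewrite (eqP (free_Sp us)) size_map. Qed.

Lemma inS_scale s x c : c != 0 -> inS s (c *: x) = inS s x.
Proof.
move=> c0; apply: eq_forallb => j; congr (_ ==> _).
by rewrite mxE mulf_eq0 (negPf c0).
Qed.

Lemma inS_sub s s' x : {subset s <= s'} ->
  inS s x = inS s' x && all (fun j => (j \in s) || (x 0 j == 0)) s'.
Proof.
move=> ss'; apply/forallP/andP => [H|[/forallP H /allP A] j].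
  split; first by apply/forallP => j; apply/implyP => /(implyP (H j)) /ss'.
  apply/allP => j _; have := H j; by case: (x 0 j == 0); rewrite ?orbT //= => ->.
apply/implyP => nz; have := H j; rewrite nz /= => /A.
by rewrite (negPf nz) orbF.
Qed.
End Gen.

End P1.
Import P1.

Module P2.
Import GRing.Theory.
Local Open Scope ring_scope.

Section Pts.
Variable (F : finFieldType) (v : nat).
Local Notation q := #|F|.
Local Notation vT := 'rV[F]_v.


Lemma vlineZ (x : vT) c : c != 0 -> <[c *: x]>%VS = <[x]>%VS.
Proof.
move=> c0; apply/eqP; rewrite eqEsubv -!memvE memvZ ?memv_line //=.
by rewrite -{1}(scalerK c0 x) memvZ ?memv_line.
Qed.

Lemma count_uniq (s : seq vT) (Q : pred vT) : uniq s ->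
  count Q s = #|[pred x | (x \in s) && Q x]|.
Proof.
move=> us; rewrite -size_filter cardE; apply: perm_size; apply: uniq_perm.
- by rewrite filter_uniq.
- by rewrite enum_uniq.
by move=> x; rewrite mem_filter !mem_enum !inE andbC.
Qed.

Lemma pts_size (s : seq vT) : uniq s ->
  (forall x, x \in s -> x != 0) ->
  (forall x c, c != 0 -> (c *: x \in s) = (x \in s)) ->
  (size (undup [seq <[x]>%VS | x <- s]) * q.-1)%N = size s.
Proof.
move=> us Pnz Pscal.
have H := big_undup_iterop_count addn [seq <[x]>%VS | x <- s] xpredT (fun _ => 1%N).
rewrite big_map sum1_size in H; rewrite -{}H.
rewrite (eq_big_seq (fun _ => q.-1)) ?big_const_seq ?count_predT.
  by elim: (size _) => //= n IH; rewrite mulSn IH.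
move=> y; rewrite mem_undup => /mapP [x0 x0P ->].
rewrite Monoid.iteropE count_map count_uniq //.
have -> : #|[pred x | (x \in s) && preim (fun x => <[x]>%VS) (pred1 <[x0]>%VS) x]| =
   #|[set c *: x0 | c in predC1 (0 : F)]|.
  apply: eq_card => x; rewrite !inE.
  apply/andP/imsetP => [[xP /eqP E]|[c c0 ->]].
    have := memv_line x; rewrite E => /vlineP [c xc].
    exists c => //; rewrite inE; apply: contraNneq (Pnz _ xP) => c0.
    by rewrite xc c0 scale0r.
  rewrite inE in c0; split; last by rewrite vlineZ.
  by rewrite Pscal.
rewrite card_imset ?cardC1.
  by elim: (q.-1) => //= n ->.
move=> c d /eqP; rewrite -subr_eq0 -scalerBl scaler_eq0 subr_eq0.
by rewrite (negPf (Pnz _ x0P)) orbF => /eqP.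
Qed.

Definition pts (P : pred vT) : seq {vspace vT} :=
  undup [seq <[x]>%VS | x <- enum P].

Section WithP.
Variable P : pred vT.
Hypothesis Pnz : forall x, P x -> x != 0.
Hypothesis Pscal : forall x c, c != 0 -> P (c *: x) = P x.

Lemma pts_point : point_set (pts P).
Proof.
split; first exact: undup_uniq.
apply/allP => y; rewrite mem_undup => /mapP [x xP ->].
rewrite mem_enum in xP; by rewrite /is_point dim_vline Pnz.
Qed.

Lemma pts_count (H : {vspace vT}) :
  (count_in (pts P) H * q.-1)%N = #|[pred x | P x && (x \in H)]|.
Proof.
rewrite /count_in /pts -size_filter filter_undup filter_map.
rewrite (eq_filter (a2 := fun x => x \in H)); last by move=> x; rewrite /= memvE.
rewrite pts_size.
- rewrite size_filter count_uniq ?enum_uniq //; apply: eq_card => x.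
  by rewrite !inE mem_enum.
- by rewrite filter_uniq ?enum_uniq.
- by move=> x; rewrite mem_filter mem_enum => /andP[_ /Pnz].
move=> x c c0; rewrite !mem_filter -!enumT !mem_enum.
have -> : (c *: x \in H) = (x \in H).
  by apply/idP/idP => ?; [rewrite -(scalerK c0 x) |]; apply: memvZ.
by rewrite !inE -!topredE /= Pscal.
Qed.
End WithP.
End Pts.

End P2.
Import P2.

Module P3.
Import GRing.Theory.
Local Open Scope ring_scope.

Section Constr.
Variable (F : finFieldType).
Local Notation q := #|F|.
Local Notation v := (7 + #|F|)%N.
Local Notation vT := 'rV[F]_v.
Local Notation Sp s := (@Sp F v s).

Definition o0 : 'I_v := @Ordinal v 0 isT.
Definition o1 : 'I_v := @Ordinal v 1 isT.
Definition o2 : 'I_v := @Ordinal v 2 isT.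
Definition o3 : 'I_v := @Ordinal v 3 isT.
Definition o4 : 'I_v := @Ordinal v 4 isT.
Definition o5 : 'I_v := @Ordinal v 5 isT.
Definition o6 : 'I_v := @Ordinal v 6 isT.

Definition nz (x : vT) j := x 0 j != 0.
Definition F1 (x : vT) := [exists j : 'I_v, [&& (7 < j)%N, nz x j & inS [:: o0; o1; j] x]].
Definition F2 (x : vT) := [&& inS [:: o0; o1; o2; o3] x, nz x o1 & nz x o2 || nz x o3].
Definition F3 (x : vT) := [&& inS [:: o0; o4; o5; o6] x, nz x o0 & [|| nz x o4, nz x o5 | nz x o6]].
Definition PC (x : vT) := [|| F1 x, F2 x | F3 x].

Local Notation W2 := [:: o0; o1; o2; o3].
Local Notation U2 := [:: o0; o2; o3].
Local Notation L1 := [:: o0; o1].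
Local Notation E0 := [:: o0].
Local Notation W3 := [:: o0; o4; o5; o6].
Local Notation U3 := [:: o4; o5; o6].
Local Notation E := (@nil 'I_v).

Lemma I2 x : ((F2 x)%:R : int) = (inS W2 x)%:R - (inS U2 x)%:R - (inS L1 x)%:R + (inS E0 x)%:R.
Proof.
rewrite (@inS_sub _ _ U2 W2); last by apply/allP.
rewrite (@inS_sub _ _ L1 W2); last by apply/allP.
rewrite (@inS_sub _ _ E0 W2); last by apply/allP.
rewrite /= /F2 /nz.
by case: (inS W2 x); case: (x 0 o1 == 0); case: (x 0 o2 == 0); case: (x 0 o3 == 0); rewrite /=; ring.
Qed.

Lemma I3 x : ((F3 x)%:R : int) = (inS W3 x)%:R - (inS U3 x)%:R - (inS E0 x)%:R + (inS E x)%:R.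
Proof.
rewrite (@inS_sub _ _ U3 W3); last by apply/allP.
rewrite (@inS_sub _ _ E0 W3); last by apply/allP.
rewrite (@inS_sub _ _ E W3); last by apply/allP.
rewrite /= /F3 /nz.
by case: (inS W3 x); case: (x 0 o0 == 0); case: (x 0 o4 == 0); case: (x 0 o5 == 0); case: (x 0 o6 == 0); rewrite /=; ring.
Qed.

Lemma card_gt (n m : nat) : #|[pred j : 'I_n | (m < j)%N]| = (n - m.+1)%N.
Proof.
rewrite -sum1_card -(big_mkord (fun j => (m < j)%N) (fun _ => 1%N)) big_mkcond /=.
elim: n => [|n IH]; first by rewrite big_geq.
rewrite big_nat_recr //= IH; case: ltnP => h; lia.
Qed.

Lemma card_fan : #|[pred j : 'I_v | (7 < j)%N]| = q.-1.
Proof. by rewrite card_gt; lia. Qed.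

Lemma L1_fan (j : 'I_v) : (7 < j)%N -> (j \in L1) = false.
Proof. by move=> h; rewrite !inE; apply/negP => /orP[] /eqP jE; rewrite jE in h. Qed.

Lemma I1 x : ((F1 x)%:R : int) =
  \sum_(j : 'I_v | (7 < j)%N) ((inS [:: o0; o1; j] x)%:R) - (q.-1)%:R * (inS L1 x)%:R.
Proof.
have key (j : 'I_v) : (7 < j)%N -> inS L1 x = inS [:: o0; o1; j] x && (x 0 j == 0).
  move=> h; rewrite (@inS_sub _ _ L1 [:: o0; o1; j]); last by apply/allP => /=; rewrite ?eqxx ?orbT.
  by rewrite /= L1_fan //= andbT.
case L: (inS L1 x).
  have -> : F1 x = false.
    apply/existsP => [[j /and3P [h nzj _]]].
    by move: (key j h); rewrite L /nz in nzj *; rewrite (negPf nzj) andbF.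
  rewrite (eq_bigr (fun _ => 1)); last first.
    by move=> j h; move: (key j h); rewrite L => /esym /andP [-> _].
  by rewrite sumr_const card_fan mulr1 subrr.
rewrite mulr0 subr0.
case F1x: (F1 x).
  case/existsP: F1x => j0 /and3P [h0 nz0 in0].
  rewrite (bigD1 j0) //= in0 big1 ?addr0 // => k /andP [hk kj0].
  suff -> : inS [:: o0; o1; k] x = false by []; apply/negP => ink.
  move/forallP: ink => /(_ j0); rewrite /nz in nz0; rewrite nz0 /= !inE => /or3P [] /eqP E.
  - by rewrite E in h0.
  - by rewrite E in h0.
  - by rewrite E eqxx in kj0.
rewrite big1 // => j h; suff -> : inS [:: o0; o1; j] x = false by []; apply/negP => inj.
have := key j h; rewrite L inj /= => /esym /negbT nzj.
by move/negbT: F1x => /existsP; apply; exists j; rewrite h inj /nz nzj.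
Qed.

Lemma inSP s (x : vT) (j : 'I_v) : inS s x -> x 0 j != 0 -> j \in s.
Proof. by move/forallP/(_ j)/implyP. Qed.

Lemma F1_no (x : vT) (j : 'I_v) : F1 x -> (j <= 7)%N -> j \notin [:: o0; o1] -> x 0 j == 0.
Proof.
case/existsP => k /and3P [hk _ ink] hj jn; apply: contraTT jn => nzj.
have := inSP ink nzj; rewrite !inE => /or3P [] /eqP E; rewrite ?E ?eqxx ?orbT //.
by rewrite -E in hk; lia.
Qed.

Lemma I0 x : ((PC x)%:R : int) = (F1 x)%:R + (F2 x)%:R + (F3 x)%:R.
Proof.
have h12 : F1 x -> F2 x = false.
  move=> f1; apply/negP => /and3P [_ _ /orP [] nzj].
  - by have := F1_no (j:=o2) f1 isT isT; rewrite /nz in nzj; rewrite (negPf nzj).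
  - by have := F1_no (j:=o3) f1 isT isT; rewrite /nz in nzj; rewrite (negPf nzj).
have h13 : F1 x -> F3 x = false.
  move=> f1; apply/negP => /and3P [_ _ /or3P [] nzj].
  - by have := F1_no (j:=o4) f1 isT isT; rewrite /nz in nzj; rewrite (negPf nzj).
  - by have := F1_no (j:=o5) f1 isT isT; rewrite /nz in nzj; rewrite (negPf nzj).
  - by have := F1_no (j:=o6) f1 isT isT; rewrite /nz in nzj; rewrite (negPf nzj).
have h23 : F2 x -> F3 x = false.
  case/and3P => inW _ _; apply/negP => /and3P [_ _ /or3P [] nzj].
  - by have := inSP inW nzj.
  - by have := inSP inW nzj.
  - by have := inSP inW nzj.
rewrite /PC; case f1: (F1 x); first by rewrite h12 // h13.
case f2: (F2 x); first by rewrite h23.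
by case: (F3 x).
Qed.

Lemma q_gt1 : (1 < q)%N.
Proof. exact: finNzRing_gt1. Qed.

Lemma ident x : ((PC x)%:R : int) =
  \sum_(j : 'I_v | (7 < j)%N) ((x \in Sp [:: o0; o1; j])%:R)
  - q%:R * (x \in Sp L1)%:R + (x \in Sp W2)%:R - (x \in Sp U2)%:R
  + (x \in Sp W3)%:R - (x \in Sp U3)%:R + (x \in Sp E)%:R.
Proof.
rewrite I0 I1 I2 I3 !inS_Sp; under [in RHS]eq_bigr do rewrite inS_Sp.
have -> : (q%:R : int) = (q.-1)%:R + 1 by rewrite -{1}(prednK (ltnW q_gt1)) mulrSr.
ring.
Qed.

Lemma sumH (Q : pred vT) (H : {vspace vT}) :
  (#|[pred x | Q x && (x \in H)]|%:R : int) = \sum_(x | x \in H) ((Q x)%:R).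
Proof.
rewrite (eq_bigr (fun x => if Q x then 1 else 0)); last by move=> x _; case: (Q x).
rewrite -big_mkcondr sumr_const; congr (_ *+ _); apply: eq_card => x.
by rewrite !inE andbC.
Qed.

Lemma sumS (S H : {vspace vT}) :
  \sum_(x | x \in H) (((x \in S)%:R) : int) = (q ^ \dim (S :&: H))%:R.
Proof.
rewrite -sumH -card_vspace; congr (_ %:R); apply: eq_card => x.
by rewrite !inE memv_cap.
Qed.

Definition g (H S : {vspace vT}) : int := (q ^ \dim (S :&: H))%:R.

Lemma countH (H : {vspace vT}) :
  (#|[pred x | PC x && (x \in H)]|%:R : int) =
  \sum_(j : 'I_v | (7 < j)%N) g H (Sp [:: o0; o1; j])
  - q%:R * g H (Sp L1) + g H (Sp W2) - g H (Sp U2)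
  + g H (Sp W3) - g H (Sp U3) + g H (Sp E).
Proof.
rewrite sumH (eq_bigr _ (fun x _ => ident x)).
rewrite !big_split /= !sumrN -mulr_sumr !sumS exchange_big /=.
by under eq_bigr do rewrite sumS.
Qed.
End Constr.

End P3.
Import P3.

Module P4.
Import GRing.Theory Num.Theory.
Local Open Scope ring_scope.

Lemma dim_hyp (F : fieldType) v (S H : {vspace 'rV[F]_v}) :
  is_hyperplane H -> ((\dim S).-1 <= \dim (S :&: H))%N.
Proof.
case/andP => v0 /eqP dH; have := dimv_sum_cap S H.
have : (\dim (S + H) <= v)%N.
  by have := dimvS (subvf (S + H)); rewrite dimvf /dim /= mul1n.
lia.
Qed.

Lemma dvd_pow (q k : nat) : (2 <= k)%N ->
  (((q%:R - 1) * q%:R ^+ 2 : int) %| (q%:R ^+ k - q%:R ^+ 2))%Z.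
Proof.
move=> hk; apply/dvdzP; exists (\sum_(i < k - 2) q%:R ^+ i).
have E := subrX1 (q%:R : int) (k - 2).
rewrite -(subnK hk) exprD.
have -> : (q%:R : int) ^+ (k - 2) = (q%:R - 1) * (\sum_(i < k - 2) q%:R ^+ i) + 1.
  by rewrite -E subrK.
by rewrite addnK; ring.
Qed.

Lemma mod_fix (a b d : nat) : (d %| a + b)%N -> (b <= d)%N -> a = d - b %[mod d].
Proof.
move=> h hb; apply/eqP; rewrite -(eqn_modDr b) subnK //.
by rewrite modnn.
Qed.

Lemma comb (M s a w2 u2 w3 u3 Q2 : int) : (M %| s)%Z -> (M %| a - Q2)%Z ->
  (M %| w2 - Q2)%Z -> (M %| u2 - Q2)%Z -> (M %| w3 - Q2)%Z -> (M %| u3 - Q2)%Z ->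
  (M %| s + M - a + w2 - u2 + w3 - u3 + 1 - (1 - Q2))%Z.
Proof.
move=> /dvdzP[k1 e1] /dvdzP[k2 e2] /dvdzP[k3 e3] /dvdzP[k4 e4] /dvdzP[k5 e5] /dvdzP[k6 e6].
apply/dvdzP; exists (k1 + 1 - k2 + k3 - k4 + k5 - k6).
move/(congr1 (fun t => t + Q2)): e2; rewrite subrK => ->.
move/(congr1 (fun t => t + Q2)): e3; rewrite subrK => ->.
move/(congr1 (fun t => t + Q2)): e4; rewrite subrK => ->.
move/(congr1 (fun t => t + Q2)): e5; rewrite subrK => ->.
move/(congr1 (fun t => t + Q2)): e6; rewrite subrK => ->.
rewrite e1; ring.
Qed.

Section Main.
Variable (F : finFieldType).
Local Notation q := #|F|.
Local Notation v := (7 + #|F|)%N.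
Local Notation vT := 'rV[F]_v.
Local Notation Sp s := (@Sp F v s).
Local Notation o0 := (@o0 F). Local Notation o1 := (@o1 F).
Local Notation o2 := (@o2 F). Local Notation o3 := (@o3 F).
Local Notation o4 := (@o4 F). Local Notation o5 := (@o5 F).
Local Notation o6 := (@o6 F).
Local Notation PC := (@PC F).
Local Notation q_gt1 := (@q_gt1 F).

Lemma PC_nz (x : vT) : PC x -> x != 0.
Proof.
have z j : (0 : vT) 0 j == 0 by rewrite mxE.
apply: contraTN => /eqP ->; rewrite /PC /F1 /F2 /F3 /nz !z /= !andbF /= !orbF.
by apply/negP => /existsP [j]; rewrite z /= andbF.
Qed.

Lemma nz_scale (x : vT) c j : c != 0 -> nz (c *: x) j = nz x j.
Proof. by move=> c0; rewrite /nz mxE mulf_eq0 (negPf c0). Qed.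

Lemma PC_scal (x : vT) c : c != 0 -> PC (c *: x) = PC x.
Proof.
move=> c0; rewrite /PC /F1 /F2 /F3 !nz_scale // !inS_scale //.
by congr (_ || _); apply: eq_existsb => j; rewrite nz_scale // inS_scale.
Qed.

Definition C := pts PC.

Lemma dimP3 (j : 'I_v) : (7 < j)%N -> \dim (Sp [:: o0; o1; j]) = 3%N.
Proof.
move=> h; rewrite dim_Sp //= andbT !inE; apply/andP; split.
  by apply/eqP => /(congr1 val) /= E; rewrite -E in h.
by apply/eqP => /(congr1 val) /= E; rewrite -E in h.
Qed.

Lemma divH (H : {vspace vT}) : is_hyperplane H -> (q ^ 2 %| count_in C H + q + 1)%N.
Proof.
move=> hH.
have key := countH H; rewrite -(pts_count (@PC_nz) (@PC_scal)) -/C in key.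
set M : int := (q%:R - 1) * q%:R ^+ 2.
have g3 S : (3 <= \dim S)%N -> (M %| g H S - q%:R ^+ 2)%Z.
  move=> hS; rewrite /g natrX; apply: dvd_pow; have := dim_hyp S hH; by rewrite -subn1 => h; apply: leq_trans h; rewrite ltn_subRL.
have gL : (M %| q%:R * g H (Sp [:: o0; o1]) - q%:R ^+ 2)%Z.
  rewrite /g natrX -exprS; apply: dvd_pow.
  have := dim_hyp (Sp [:: o0; o1]) hH; rewrite dim_Sp //=; lia.
have gE : g H (Sp [::]) = 1.
  by rewrite /g /P1.Sp /= span_nil cap0v dimv0.
have hq : (q.-1%:R : int) = q%:R - 1 by rewrite -{2}(prednK (ltnW q_gt1)) mulrSr addrK.
have : (M %| (count_in C H * q.-1)%:R - (1 - q%:R ^+ 2))%Z.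
  rewrite key gE.
  have -> : \sum_(j < v | (7 < j)%N) g H (Sp [:: o0; o1; j]) =
            \sum_(j < v | (7 < j)%N) (g H (Sp [:: o0; o1; j]) - q%:R ^+ 2) + M.
    rewrite sumrB sumr_const [#|_|](_ : _ = q.-1); last exact: card_fan.
    by rewrite -[_ *+ q.-1]mulr_natr hq /M; ring.
  have d3 l : uniq l -> (3 <= size l)%N -> (M %| g H (Sp l) - q%:R ^+ 2)%Z.
    by move=> ul sl; apply: g3; rewrite dim_Sp.
  apply: comb => //; try by apply: d3.
  by apply: rpred_sum => j hj; apply: g3; rewrite dimP3.
have hq0 : (q%:R - 1 : int) != 0.
  by rewrite -hq pnatr_eq0; have := q_gt1; case: (q) => [|[|]].
move=> h.
have e : (count_in C H * q.-1)%:R - (1 - q%:R ^+ 2) =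
         (q%:R - 1) * ((count_in C H + q + 1)%N%:R : int).
  by rewrite natrM hq !natrD; ring.
rewrite e /M dvdz_mul2l // -natrX !natz in h.
exact: h.
Qed.
End Main.

Section Main2.
Variable (F : finFieldType).
Local Notation q := #|F|.
Local Notation v := (7 + #|F|)%N.
Local Notation vT := 'rV[F]_v.
Local Notation Sp s := (@Sp F v s).
Local Notation o0 := (@o0 F). Local Notation o1 := (@o1 F).
Local Notation o2 := (@o2 F). Local Notation o3 := (@o3 F).
Local Notation o4 := (@o4 F). Local Notation o5 := (@o5 F).
Local Notation o6 := (@o6 F).
Local Notation PC := (@PC F).
Local Notation q_gt1 := (@q_gt1 F).
Local Notation C := (@C F).

Lemma sizeC : size C = (3 * q ^ 3 - q ^ 2 - q - 1)%N.
Proof.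
have key := countH (fullv : {vspace vT}).
rewrite -(pts_count (@PC_nz F) (@PC_scal F)) -/C in key.
have cs : count_in C fullv = size C.
  by rewrite /count_in (eq_count (a2 := predT)) ?count_predT // => P; exact: subvf.
rewrite cs in key.
have gf (S : {vspace vT}) : g fullv S = (q%:R ^+ \dim S : int).
  by rewrite /g capvf natrX.
rewrite !gf in key.
rewrite (eq_bigr (fun _ => q%:R ^+ 3)) in key; last by move=> j h; rewrite gf dimP3.
rewrite sumr_const [#|_|](_ : _ = q.-1) in key; last exact: card_fan.
rewrite !dim_Sp //= in key.
have hq : (q.-1%:R : int) = q%:R - 1 by rewrite -{2}(prednK (ltnW q_gt1)) mulrSr addrK.
have hq0 : (q%:R - 1 : int) != 0.
  by rewrite -hq pnatr_eq0; have := q_gt1; case: (q) => [|[|]].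
have E : ((size C + q^2 + q + 1)%N%:R : int) = (3 * q^3)%N%:R.
  apply: (mulIf hq0); rewrite [in LHS]natrD [in LHS]natrD [in LHS]natrD mulrDl mulrDl mulrDl.
  rewrite -hq -natrM key hq -[_ *+ q.-1]mulr_natr hq natrM !natrX; ring.
move/eqP: E; rewrite eqr_nat => /eqP E.
move: E; set a := (q ^ 2)%N; set b := (q ^ 3)%N; lia.
Qed.
End Main2.

Lemma sum_sub (F : fieldType) (vT : vectType F) (r : seq {vspace vT}) V :
  (forall P, P \in r -> (P <= V)%VS) -> (\sum_(P <- r) P <= V)%VS.
Proof.
elim: r => [|a r IH] H; first by rewrite big_nil sub0v.
rewrite big_cons subv_add H ?mem_head // IH // => P Pr.
by apply: H; rewrite in_cons Pr orbT.
Qed.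

Lemma sub_sum (F : fieldType) (vT : vectType F) (r : seq {vspace vT}) P :
  P \in r -> (P <= \sum_(Q <- r) Q)%VS.
Proof.
elim: r => [|a r IH] //; rewrite in_cons big_cons => /orP [/eqP ->|Pr].
  exact: addvSl.
exact: subv_trans (IH Pr) (addvSr _ _).
Qed.

Section Main3.
Variable (F : finFieldType).
Local Notation q := #|F|.
Local Notation v := (7 + #|F|)%N.
Local Notation vT := 'rV[F]_v.
Local Notation Sp s := (@Sp F v s).
Local Notation o0 := (@o0 F). Local Notation o1 := (@o1 F).
Local Notation o2 := (@o2 F). Local Notation o3 := (@o3 F).
Local Notation o4 := (@o4 F). Local Notation o5 := (@o5 F).
Local Notation o6 := (@o6 F).
Local Notation PC := (@PC F).
Local Notation F1 := (@F1 F). Local Notation F2 := (@F2 F). Local Notation F3 := (@F3 F).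
Local Notation q_gt1 := (@q_gt1 F).
Local Notation C := (@C F).

Lemma o7P : (7 < v)%N. Proof. have := q_gt1; lia. Qed.
Definition o7 : 'I_v := Ordinal o7P.
Lemma o8P : (8 < v)%N. Proof. have := q_gt1; lia. Qed.
Definition o8 : 'I_v := Ordinal o8P.

Definition A0 := enum [pred j : 'I_v | j != o7].

Lemma PC_o7 (x : vT) : PC x -> x 0 o7 == 0.
Proof.
case/or3P => [f1|/and3P [inW _ _]|/and3P [inW _ _]].
- exact: (F1_no (j:=o7)).
- by apply: contraLR isT => /(inSP inW).
- by apply: contraLR isT => /(inSP inW).
Qed.

Lemma inSum (x : vT) : PC x -> x \in (\sum_(P <- C) P)%VS.
Proof.
move=> px; have := memv_line x; rewrite memvE => /subv_trans; apply.
by apply: sub_sum; rewrite mem_undup; apply: map_f; rewrite mem_enum.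
Qed.

Lemma span_eq : (\sum_(P <- C) P)%VS = Sp A0.
Proof.
apply/eqP; rewrite eqEsubv; apply/andP; split.
  apply: sum_sub => P; rewrite mem_undup => /mapP [x xP ->].
  rewrite -memvE inS_Sp; apply/forallP => j; apply/implyP => nzj.
  rewrite mem_enum inE; apply: contra nzj => /eqP ->.
  by rewrite mem_enum in xP; exact: PC_o7.
apply/span_subvP => y /mapP [j]; rewrite mem_enum inE => j7 ->.
have pe (k : 'I_v) : (7 < k)%N -> PC 'e_k.
  move=> hk; apply/orP; left; apply/existsP; exists k.
  by rewrite hk /nz nz_e eqxx inS_e !inE eqxx !orbT.
have p18 : PC ('e_o1 + 'e_o8).
  apply/orP; left; apply/existsP; exists o8.
  by rewrite /nz nz_e2 // inS_e2.
have p08 : PC ('e_o0 + 'e_o8).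
  apply/orP; left; apply/existsP; exists o8.
  by rewrite /nz nz_e2 // inS_e2.
have p12 : PC ('e_o1 + 'e_o2) by apply/or3P; apply: Or32; rewrite /F2 /nz !nz_e2 // inS_e2.
have p13 : PC ('e_o1 + 'e_o3) by apply/or3P; apply: Or32; rewrite /F2 /nz !nz_e2 // inS_e2.
have p04 : PC ('e_o0 + 'e_o4) by apply/or3P; apply: Or33; rewrite /F3 /nz !nz_e2 // inS_e2.
have p05 : PC ('e_o0 + 'e_o5) by apply/or3P; apply: Or33; rewrite /F3 /nz !nz_e2 // inS_e2.
have p06 : PC ('e_o0 + 'e_o6) by apply/or3P; apply: Or33; rewrite /F3 /nz !nz_e2 // inS_e2.
have e8 : 'e_o8 \in (\sum_(P <- C) P)%VS by apply: inSum; apply: pe.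
have e1 : 'e_o1 \in (\sum_(P <- C) P)%VS.
  by rewrite -(addrK 'e_o8 'e_o1); apply: memvB => //; apply: inSum.
have e0 : 'e_o0 \in (\sum_(P <- C) P)%VS.
  by rewrite -(addrK 'e_o8 'e_o0); apply: memvB => //; apply: inSum.
have eB (a b : 'I_v) : 'e_a \in (\sum_(P <- C) P)%VS -> PC ('e_a + 'e_b) ->
    'e_b \in (\sum_(P <- C) P)%VS.
  move=> ea pab; have -> : ('e_b : vT) = ('e_a + 'e_b) - 'e_a by rewrite addrC addKr.
  by apply: memvB => //; apply: inSum.
case: j j7 => [[|[|[|[|[|[|[|[|k]]]]]]]] hj] j7.
- by have -> : Ordinal hj = o0 by apply: val_inj.
- by have -> : Ordinal hj = o1 by apply: val_inj.
- have -> : Ordinal hj = o2 by apply: val_inj.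
  by apply: eB p12.
- have -> : Ordinal hj = o3 by apply: val_inj.
  by apply: eB p13.
- have -> : Ordinal hj = o4 by apply: val_inj.
  by apply: eB p04.
- have -> : Ordinal hj = o5 by apply: val_inj.
  by apply: eB p05.
- have -> : Ordinal hj = o6 by apply: val_inj.
  by apply: eB p06.
- by have := j7; rewrite (_ : Ordinal hj = o7) //; apply: val_inj.
by apply: inSum; apply: pe.
Qed.
End Main3.

End P4.
Import P4.


Import GRing.Theory Num.Theory.
Local Open Scope ring_scope.

Theorem corollary4p14 (F : finFieldType) :
  let q := #|F| in
  exists (v : nat) (C : seq {vspace 'rV[F]_v}),
    [/\ point_set C,
        divisible (q ^ 2) C,
        size C = (3 * q ^ 3 - q ^ 2 - q - 1)%N,
        (maxn 8 (q + 5) <= span_dim C)%N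
      & (span_dim C <= maxn 8 (2 * q + 3))%N].
Proof.
move=> q; have q2 := q_gt1 F.
have sd : span_dim (C F) = (q + 6)%N.
  rewrite /span_dim span_eq dim_Sp ?enum_uniq // -cardE.
  rewrite (eq_card (B := predC1 (o7 F))) ?cardC1 ?card_ord; first by rewrite /q; lia.
  by move=> j; rewrite !inE.
exists (7 + q)%N, (C F); split.
- rewrite /C; apply: pts_point; exact: PC_nz.
- exists (q ^ 2 - q - 1)%N => H hH.
  rewrite -subnDA; apply: mod_fix; first by rewrite addnA; exact: divH.
  rewrite expnS expn1; nia.
- exact: sizeC.
- rewrite sd; lia.
- rewrite sd; lia.
Qed.
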